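(* Let $M\models\mathrm{AA}_0$ and $x,y\in M$. Then $x\le y$ if and only if there exists $t\in M$ such that $x+t=y$; moreover such $t$ is unique.
   Context: Structures are complete metric spaces of diameter at most $1$ in $L=\{+,\cdot,\wedge,\vee,0,1\}$ (operations $1$-Lipschitz, $d$ the only relation symbol); affine conditions use formulas built from $1$ and $d(t_1,t_2)$ via $+$, real scalar multiples, $\sup$, $\inf$, free variables universally quantified. $|x|=d(x,0)$; $x\le y$ means $x\wedge y=x$; $nx$, $x^n$ iterated sum/product. $\mathrm{AA}_0$ consists of: (A1) the identities of the nonnegative part of a lattice-ordered commutative ring with identity (commutative semiring axioms, lattice axioms, distributivity of $+,\cdot$ over $\wedge,\vee$, $0\le x$); (A2) $\inf_y d(x,(x\wedge y)+1)=1-|x|$ and $x\le x^2$; (A3) $d(x+z,y+z)=d(x,y)$; (A4) $d(y,z)\le d(xy,xz)+1-|x|$; (A5) $d(xy,xz)=d(x^ny,x^nz)\le d(y,z)$; (A6) $d(nx,ny)=d(x^n,y^n)=d(x,y)$, $n\ge1$; (A7) $|x\wedge y|+|x\vee y|=|x|+|y|$; (A8) $|xy+z|=|(x\wedge y)+z|$; (A9) $|x+y+z|=|(x\vee y)+z|$; (A10) $\inf_t d((x\wedge y)+t,y)=0$. *)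

(* Defs.v *)
From Stdlib Require Import Reals.
Open Scope R_scope.

Record LStruct : Type := {
  car :> Type;
  dist : car -> car -> R;
  add : car -> car -> car;
  mul : car -> car -> car;
  meet : car -> car -> car;
  join : car -> car -> car;
  zero : car;
  one : car
}.

Arguments dist {_}. Arguments add {_}. Arguments mul {_}.
Arguments meet {_}. Arguments join {_}. Arguments zero {_}. Arguments one {_}.

Section Defs.
Variable M : LStruct.

Definition nrm (x : M) : R := dist x zero.

Definition le (x y : M) : Prop := meet x y = x.

(* n x and x^n: iterated sum / product (used only for n >= 1) *)
Fixpoint nsum (n : nat) (x : M) : M :=
  match n with O => zero | S O => x | S k => add x (nsum k x) end.
Fixpoint npow (n : nat) (x : M) : M :=
  match n with O => one | S O => x | S k => mul x (npow k x) end.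

Definition is_inf (f : M -> R) (a : R) : Prop :=
  (forall (y : M), a <= f y) /\ (forall e : R, 0 < e -> exists y, f y < a + e).

Definition cauchy (u : nat -> M) : Prop :=
  forall e : R, 0 < e -> exists N, forall m n : nat, (N <= m)%nat -> (N <= n)%nat ->
    dist (u m) (u n) < e.
Definition converges (u : nat -> M) : Prop :=
  exists l, forall e : R, 0 < e -> exists N, forall n : nat, (N <= n)%nat -> dist (u n) l < e.

Definition complete_metric_diam1 : Prop :=
  (forall (x : M) (y : M), 0 <= dist x y) /\
  (forall (x : M) (y : M), dist x y = 0 <-> x = y) /\
  (forall (x : M) (y : M), dist x y = dist y x) /\
  (forall (x : M) (y : M) (z : M), dist x z <= dist x y + dist y z) /\
  (forall (x : M) (y : M), dist x y <= 1) /\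
  (forall u : nat -> M, cauchy u -> converges u).

(* operations 1-Lipschitz (in each argument, i.e. w.r.t. the sum metric) *)
Definition lip2 (f : M -> M -> M) : Prop :=
  forall (x : M) (x' : M) (y : M) (y' : M), dist (f x y) (f x' y') <= dist x x' + dist y y'.
Definition ops_lipschitz : Prop :=
  lip2 add /\ lip2 mul /\ lip2 meet /\ lip2 join.

(* (A1) identities of the nonnegative part of a lattice-ordered commutative
   ring with identity *)
Definition A1 : Prop :=
  (forall (x : M) (y : M) (z : M), add x (add y z) = add (add x y) z) /\
  (forall (x : M) (y : M), add x y = add y x) /\
  (forall (x : M), add zero x = x) /\
  (forall (x : M) (y : M) (z : M), mul x (mul y z) = mul (mul x y) z) /\
  (forall (x : M) (y : M), mul x y = mul y x) /\
  (forall (x : M), mul one x = x) /\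
  (forall (x : M), mul zero x = zero) /\
  (forall (x : M) (y : M) (z : M), mul x (add y z) = add (mul x y) (mul x z)) /\
  (forall (x : M) (y : M) (z : M), meet x (meet y z) = meet (meet x y) z) /\
  (forall (x : M) (y : M), meet x y = meet y x) /\
  (forall (x : M) (y : M) (z : M), join x (join y z) = join (join x y) z) /\
  (forall (x : M) (y : M), join x y = join y x) /\
  (forall (x : M) (y : M), meet x (join x y) = x) /\
  (forall (x : M) (y : M), join x (meet x y) = x) /\
  (* the lattice of an l-ring is distributive *)
  (forall (x : M) (y : M) (z : M), meet x (join y z) = join (meet x y) (meet x z)) /\
  (forall (x : M) (y : M) (z : M), add x (meet y z) = meet (add x y) (add x z)) /\
  (forall (x : M) (y : M) (z : M), add x (join y z) = join (add x y) (add x z)) /\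
  (forall (x : M) (y : M) (z : M), mul x (meet y z) = meet (mul x y) (mul x z)) /\
  (forall (x : M) (y : M) (z : M), mul x (join y z) = join (mul x y) (mul x z)) /\
  (forall (x : M), le zero x).

Definition AA0_axioms : Prop :=
  A1 /\
  (forall (x : M), is_inf (fun y => dist x (add (meet x y) one)) (1 - nrm x)) /\
  (forall (x : M), le x (mul x x)) /\
  (forall (x : M) (y : M) (z : M), dist (add x z) (add y z) = dist x y) /\
  (forall (x : M) (y : M) (z : M), dist y z <= dist (mul x y) (mul x z) + 1 - nrm x) /\
  (forall (n : nat) (x : M) (y : M) (z : M), (1 <= n)%nat ->
     dist (mul x y) (mul x z) = dist (mul (npow n x) y) (mul (npow n x) z) /\
     dist (mul (npow n x) y) (mul (npow n x) z) <= dist y z) /\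
  (forall (n : nat) (x : M) (y : M), (1 <= n)%nat ->
     dist (nsum n x) (nsum n y) = dist x y /\ dist (npow n x) (npow n y) = dist x y) /\
  (forall (x : M) (y : M), nrm (meet x y) + nrm (join x y) = nrm x + nrm y) /\
  (forall (x : M) (y : M) (z : M), nrm (add (mul x y) z) = nrm (add (meet x y) z)) /\
  (forall (x : M) (y : M) (z : M), nrm (add (add x y) z) = nrm (add (join x y) z)) /\
  (forall (x : M) (y : M), is_inf (fun t => dist (add (meet x y) t) y) 0).

Definition models_AA0 : Prop :=
  complete_metric_diam1 /\ ops_lipschitz /\ AA0_axioms.

End Defs.

(* Main.v *)
Require Import Defs.
From Stdlib Require Import Reals Lra Lia ZArith.
From Stdlib Require Import IndefiniteDescription.

Lemma inv_small (e : R) : 0 < e -> exists N : nat, forall m : nat, (N <= m)%nat -> / (INR m + 1) < e.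
Proof.
  intros He.
  destruct (archimed (/ e)) as [H1 _].
  destruct (Z.le_gt_cases (up (/ e)) 0) as [Hz|Hz].
  - exists 0%nat. intros m _.
    assert (Hie : 0 < / e) by (apply Rinv_0_lt_compat; lra).
    apply IZR_le in Hz. lra.
  - exists (Z.to_nat (up (/ e))). intros m Hm.
    assert (HN : IZR (up (/ e)) = INR (Z.to_nat (up (/ e)))).
    { rewrite INR_IZR_INZ. rewrite Z2Nat.id; [reflexivity|lia]. }
    apply le_INR in Hm.
    assert (Hie : 0 < / e) by (apply Rinv_0_lt_compat; lra).
    assert (Hpos : 0 < INR m + 1) by (pose proof (pos_INR m); lra).
    assert (/ e < INR m + 1) by lra.
    rewrite <- (Rinv_inv e).
    apply Rinv_lt_contravar; [apply Rmult_lt_0_compat; lra | exact H].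
Qed.

Theorem mainTheorem18 (M : LStruct) (HM : models_AA0 M) (x y : M) :
  (le M x y <-> exists t : M, add x t = y) /\
  (forall t t' : M, add x t = y -> add x t' = y -> t = t').
Proof.
  destruct HM as [[Dpos [Deq [Dsym [Dtri [_ Dcomp]]]]] [_ [A1 [_ [_ [A3 [_ [_ [_ [_ [_ [_ A10]]]]]]]]]]]].
  destruct A1 as [_ [addC [add0 [_ [_ [_ [_ [_ [_ [_ [_ [_ [_ [_ [_ [addMeet [_ [_ [_ zle]]]]]]]]]]]]]]]]]]].
  assert (canc : forall a b c : M, Defs.dist (add c a) (add c b) = Defs.dist a b).
  { intros a b c. rewrite (addC c a), (addC c b). apply A3. }
  split.
  - split.
    + intros Hle. unfold le in Hle.
      destruct (A10 x y) as [_ Hinf]. rewrite Hle in Hinf.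
      assert (Hex : forall n : nat, exists t, Defs.dist (add x t) y < 0 + / (INR n + 1)).
      { intros n. apply Hinf. apply Rinv_0_lt_compat. pose proof (pos_INR n); lra. }
      set (f := fun n => proj1_sig (constructive_indefinite_description _ (Hex n))).
      assert (Hf : forall n, Defs.dist (add x (f n)) y < / (INR n + 1)).
      { intros n. unfold f. destruct (constructive_indefinite_description _ (Hex n)) as [t Ht]. simpl. lra. }
      assert (Hc : cauchy M f).
      { intros e He. destruct (inv_small (e/2)) as [N HN]; [lra|].
        exists N. intros m n Hm Hn.
        rewrite <- (canc _ _ x).
        pose proof (Dtri (add x (f m)) y (add x (f n))).
        pose proof (Hf m). pose proof (Hf n). pose proof (HN m Hm). pose proof (HN n Hn).
        rewrite (Dsym y) in H. lra. }
      destruct (Dcomp f Hc) as [l Hl].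
      exists l.
      apply Deq.
      pose proof (Dpos (add x l) y) as Hp.
      destruct (Rle_lt_or_eq_dec _ _ Hp) as [Hlt|Heq]; [|lra].
      exfalso.
      set (e := Defs.dist (add x l) y) in *.
      destruct (Hl (e/2)) as [N1 HN1]; [lra|].
      destruct (inv_small (e/2)) as [N2 HN2]; [lra|].
      set (n := Nat.max N1 N2).
      assert (h1 := HN1 n (Nat.le_max_l _ _)).
      assert (h2 := HN2 n (Nat.le_max_r _ _)).
      pose proof (Hf n).
      pose proof (Dtri (add x l) (add x (f n)) y).
      rewrite canc, (Dsym l) in H0. fold e in H0. lra.
    + intros [t Ht]. subst y. unfold le.
      rewrite <- (add0 x) at 1. rewrite (addC zero x).
      rewrite <- addMeet. pose proof (zle t) as Hz. unfold le in Hz. rewrite Hz.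
      rewrite addC. apply add0.
  - intros t t' H H'. apply Deq. rewrite <- (canc _ _ x). rewrite H, H'. apply Deq. reflexivity.
Qed.
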